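(* Let $n\ge 1$ be an integer. There exist a tensor $A\in\mathbb{C}^{2n\times 2n\times 2}$ with $\operatorname{rank}(A)=3n$ and a sequence of tensors $(A_k)_{k\in\mathbb{N}}\subset\mathbb{C}^{2n\times 2n\times 2}$ with $\operatorname{rank}(A_k)=2n$ for every $k$, such that $A_k\to A$ as $k\to\infty$ in the Euclidean (entrywise) topology.
   Context: $\mathbb{C}^{l\times m\times p}$ is the space of complex arrays $(a_{ijk})$ of size $l\times m\times p$. For vectors $\mathbf{x},\mathbf{y},\mathbf{z}$ of appropriate sizes, $\mathbf{x}\otimes\mathbf{y}\otimes\mathbf{z}=(x_iy_jz_k)$ is an elementary tensor. The tensor rank of a tensor is the least number of elementary tensors (over $\mathbb{C}$) whose sum equals it. *)

(* Defs.v *)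
From Stdlib Require Import Reals.
Open Scope R_scope.

Record C := mkC { Re : R; Im : R }.

Definition C0 : C := mkC 0 0.
Definition Cadd (a b : C) : C := mkC (Re a + Re b) (Im a + Im b).
Definition Cmul (a b : C) : C :=
  mkC (Re a * Re b - Im a * Im b) (Re a * Im b + Im a * Re b).
Definition Csub (a b : C) : C := mkC (Re a - Re b) (Im a - Im b).
Definition Cnorm (a : C) : R := sqrt (Re a * Re a + Im a * Im a).

Fixpoint Csum (r : nat) (f : nat -> C) : C :=
  match r with
  | O => C0
  | S r' => Cadd (Csum r' f) (f r')
  end.

(* A tensor in C^{l x m x p}: a function of three indices; only the entries
   with i < l, j < m, k < p are meaningful. *)
Definition tensor := nat -> nat -> nat -> C.

Definition sum_of_elementary (l m p r : nat) (A : tensor) : Prop :=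
  exists (x y z : nat -> nat -> C),
    forall i j k, (i < l)%nat -> (j < m)%nat -> (k < p)%nat ->
      A i j k = Csum r (fun t => Cmul (Cmul (x t i) (y t j)) (z t k)).

Definition tensor_rank_eq (l m p : nat) (A : tensor) (r : nat) : Prop :=
  sum_of_elementary l m p r A /\
  forall r', (r' < r)%nat -> ~ sum_of_elementary l m p r' A.

(* Entrywise (equivalently Euclidean) convergence of a sequence of tensors *)
Definition tensor_converges (l m p : nat) (Ak : nat -> tensor) (A : tensor) : Prop :=
  forall eps, eps > 0 -> exists N : nat, forall k, (N <= k)%nat ->
    forall i j q, (i < l)%nat -> (j < m)%nat -> (q < p)%nat ->
      Cnorm (Csub (Ak k i j q) (A i j q)) < eps.

(* Main.v *)
Require Import Defs.
From Stdlib Require Import Reals Lra Lia.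
From mathcomp Require all_boot all_order all_algebra zify Rstruct complex.

Module Aux.
Import all_boot all_order all_algebra zify Rstruct complex.
Set Implicit Arguments. Unset Strict Implicit. Unset Printing Implicit Defensive.
Import GRing.Theory.
Local Open Scope ring_scope.

Lemma lower2 (F : fieldType) m r (X Y : 'M[F]_(m, r)) (d : 'rV[F]_r) :
  X *m diag_mx d *m Y^T = 1%:M -> (m <= r)%N.
Proof.
move=> H; have := mxrankM_maxl (X *m diag_mx d) Y^T.
rewrite H mxrank1 => /leq_trans; apply.
exact: leq_trans (mxrankM_maxl _ _) (rank_leq_col X).
Qed.

Lemma lower3 (F : fieldType) n r (X Y : 'M[F]_(n + n, r)) (d0 d1 : 'rV[F]_r) :
  X *m diag_mx d0 *m Y^T = 1%:M ->
  X *m diag_mx d1 *m Y^T = block_mx 0 1%:M 0 0 ->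
  (3 * n <= r)%N.
Proof.
move=> H0 H1.
set Xt := usubmx X; set Xb := dsubmx X.
have eX : X = col_mx Xt Xb by rewrite vsubmxK.
have rXb : row_full Xb^T.
  rewrite /row_full mxrank_tr eqn_leq rank_leq_row /=.
  move: H0; rewrite eX !mul_col_mx scalar_mx_block -[block_mx _ _ _ _]/(col_mx _ _).
  case/eq_col_mx => _ Hb.
  have h1 := mxrankM_maxl (Xb *m diag_mx d0) Y^T; rewrite Hb in h1.
  have h2 := mxrankM_maxl Xb (diag_mx d0).
  have := mxrankM_maxl (row_mx (0 : 'M[F]_(n, n)) 1%:M) (col_mx 0 1%:M).
  rewrite mul_row_col mul0mx mulmx1 add0r mxrank1 => h3.
  exact: leq_trans h3 (leq_trans h1 h2).
set f := fullrankfun rXb.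
pose Es : 'M[F]_(r, n) := \matrix_(t, i) (t == f i)%:R.
have eB : Xb *m Es = (rowsub f Xb^T)^T.
  apply/matrixP => i j; rewrite !mxE (bigD1 (f j)) //= !mxE eqxx mulr1 big1 ?addr0 //.
  move=> t ht; rewrite /Es !mxE; move: ht; case: eqP => // _ _; by rewrite mulr0.
have uB : Xb *m Es \in unitmx by rewrite eB unitmx_tr fullrowsub_unit.
pose G := Xt *m Es *m invmx (Xb *m Es).
pose P := row_mx (1%:M : 'M[F]_n) (- G).
pose Q := P *m X.
have QE : Q *m Es = 0.
  rewrite /Q eX mul_row_col mul1mx mulNmx mulmxDl mulNmx /G -!mulmxA.
  by rewrite mulVmx // mulmx1 subrr.
have dE d : diag_mx d *m Es = Es *m diag_mx (\row_i d 0 (f i)).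
  rewrite mul_diag_mx mul_mx_diag; apply/matrixP => t i; rewrite !mxE.
  by case: eqP => [->|]; rewrite ?mulr1 ?mulr0 ?mul1r ?mul0r.
pose K := col_mx (Q *m diag_mx d0) (Q *m diag_mx d1).
have KE : K *m Es = 0.
  by rewrite mul_col_mx -!mulmxA !dE !mulmxA QE !mul0mx col_mx0.
have rK := mulmx0_rank_max KE.
have rEs : (n <= \rank Es)%N.
  by have := mxrankM_maxr Xb Es; rewrite mxrank_unit.
have KY : K *m Y^T = block_mx 1%:M (- G) 0 1%:M.
  rewrite mul_col_mx /Q -!mulmxA !(mulmxA X) H0 H1 mulmx1.
  rewrite /P mul_row_block !mulmx0 mulmx1 !addr0.
  by rewrite -[block_mx _ _ _ _]/(col_mx _ _).
have uM : block_mx 1%:M (- G) 0 1%:M \in unitmx.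
  by rewrite unitmxE det_ublock !det1 mulr1 unitr1.
have := mxrankM_maxl K Y^T; rewrite KY mxrank_unit //.
move=> h; have := leq_add h rEs; move/leq_trans/(_ rK).
by rewrite (_ : 3 * n = n + n + n)%N //; lia.
Qed.

Notation CC := (complex R).
Definition phi (c : Defs.C) : CC := Complex (Defs.Re c) (Defs.Im c).
Definition psi (z : CC) : Defs.C := mkC (complex.Re z) (complex.Im z).

Lemma phi_add a b : phi (Cadd a b) = phi a + phi b. Proof. by case: a; case: b. Qed.
Lemma phi_mul a b : phi (Cmul a b) = phi a * phi b. Proof. by case: a; case: b. Qed.
Lemma phi_0 : phi C0 = 0. Proof. by []. Qed.
Lemma phi_psi z : phi (psi z) = z. Proof. by case: z. Qed.
Lemma phi_inj a b : phi a = phi b -> a = b.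
Proof. by case: a => ? ?; case: b => ? ? [-> ->]. Qed.

Lemma phi_sum r f : phi (Csum r f) = \sum_(t < r) phi (f t).
Proof.
elim: r => [|r IH]; first by rewrite big_ord0.
by rewrite big_ord_recr /= phi_add IH.
Qed.

Definition Mat m (T : tensor) (k : nat) : 'M[CC]_m := \matrix_(i, j) phi (T i j k).

Lemma extract m r T : sum_of_elementary m m 2 r T ->
  exists (X Y : 'M[CC]_(m, r)) (d0 d1 : 'rV[CC]_r),
    Mat m T 0 = X *m diag_mx d0 *m Y^T /\ Mat m T 1 = X *m diag_mx d1 *m Y^T.
Proof.
case=> x [y [z H]].
exists (\matrix_(i, t) phi (x t i)), (\matrix_(i, t) phi (y t i)).
exists (\row_t phi (z t 0%N)), (\row_t phi (z t 1%N)).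
have H' k (hk : (k < 2)%N) (i j : 'I_m) :
    phi (T i j k) = \sum_(t < r) phi (x t i) * phi (y t j) * phi (z t k).
  rewrite (H i j k (elimT ltP (ltn_ord i)) (elimT ltP (ltn_ord j)) (elimT ltP hk)) phi_sum.
  by apply: eq_bigr => t _; rewrite !phi_mul.
split; apply/matrixP => i j; rewrite mul_mx_diag !mxE H' //;
  by apply: eq_bigr => t _; rewrite !mxE mulrAC.
Qed.

Definition natmx m r (X : 'M[CC]_(m, r)) (i t : nat) : CC :=
  if (insub i : option 'I_m) is Some i' then
    (if (insub t : option 'I_r) is Some t' then X i' t' else 0) else 0.
Lemma natmxE m r (X : 'M[CC]_(m, r)) (i : 'I_m) (t : 'I_r) : natmx X i t = X i t.
Proof. by rewrite /natmx !valK. Qed.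

Lemma realize m r T (X Y : 'M[CC]_(m, r)) (d0 d1 : 'rV[CC]_r) :
  Mat m T 0 = X *m diag_mx d0 *m Y^T -> Mat m T 1 = X *m diag_mx d1 *m Y^T ->
  sum_of_elementary m m 2 r T.
Proof.
move=> H0 H1.
exists (fun t i => psi (natmx X i t)), (fun t i => psi (natmx Y i t)).
exists (fun t k => psi (if k == 0%N then natmx d0 0 t else natmx d1 0 t)).
move=> i j k hi hj hk; apply: phi_inj; rewrite phi_sum.
pose i' := Ordinal (introT ltP hi); pose j' := Ordinal (introT ltP hj).
have -> : phi (T i j k) = Mat m T k i' j' by rewrite mxE.
have : (k = 0 \/ k = 1)%N by lia.
have nX (t : 'I_r) : natmx X i t = X i' t := natmxE X i' t.
have nY (t : 'I_r) : natmx Y j t = Y j' t := natmxE Y j' t.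
have n0 (t : 'I_r) : natmx d0 0 t = d0 0 t := natmxE d0 0 t.
have n1 (t : 'I_r) : natmx d1 0 t = d1 0 t := natmxE d1 0 t.
case=> ->; rewrite ?H0 ?H1 mul_mx_diag !mxE; apply: eq_bigr => t _;
  by rewrite !phi_mul !phi_psi /= nX nY ?n0 ?n1 !mxE mulrAC.
Qed.

Definition Cb (b : bool) : Defs.C := if b then mkC R1 R0 else C0.
Lemma phi_Cb b : phi (Cb b) = b%:R. Proof. by case: b. Qed.

Definition Atens n : tensor := fun i j k =>
  if (k == 0)%N then Cb (i == j) else Cb ((i < n) && (j == i + n))%N.
Definition eps (k : nat) : R := Rinv (INR k.+1).
Definition Aktens n k : tensor := fun i j q =>
  if (q == 0)%N then Cb (i == j)
  else Cadd (Cb ((i < n) && (j == i + n))%N) (Cmul (mkC (eps k) R0) (Cb ((n <= i) && (i == j))%N)).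

Ltac ordsplit i j := case: (split_ordP i) => [i' ->|i' ->]; case: (split_ordP j) => [j' ->|j' ->];
  have := ltn_ord i'; have := ltn_ord j'; move=> ? ?.

Lemma natb0 (b : bool) : ~~ b -> b%:R = 0 :> CC. Proof. by move/negbTE=> ->. Qed.
Lemma natbb (b c : bool) : b = c -> b%:R = c%:R :> CC. Proof. by move=> ->. Qed.

Ltac bsplit := repeat match goal with
 | |- context [(?a == ?b)%N] => case: (@eqP nat a b); intro
 | |- context [(?a <= ?b)%N] => case: (@leqP a b); intro
 end.

Lemma MatA0 n : Mat (n + n) (Atens n) 0 = 1%:M.
Proof. by apply/matrixP => i j; rewrite !mxE phi_Cb. Qed.

Lemma MatA1 n : Mat (n + n) (Atens n) 1 = block_mx 0 1%:M 0 0.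
Proof.
apply/matrixP => i j; rewrite mxE /Atens /= phi_Cb.
ordsplit i j; rewrite ?block_mxEul ?block_mxEur ?block_mxEdl ?block_mxEdr !mxE /=;
  try done; first [apply: natb0 | apply: natbb]; rewrite -?val_eqE /=; lia.
Qed.

Lemma MatAk0 n k : Mat (n + n) (Aktens n k) 0 = 1%:M.
Proof. by apply/matrixP => i j; rewrite !mxE phi_Cb. Qed.

Lemma MatAk1 n k : Mat (n + n) (Aktens n k) 1 = block_mx 0 1%:M 0 (Complex (eps k) 0)%:M.
Proof.
apply/matrixP => i j; rewrite mxE /Aktens /= phi_add phi_mul !phi_Cb.
ordsplit i j; rewrite ?block_mxEul ?block_mxEur ?block_mxEdl ?block_mxEdr !mxE /=;
  rewrite -?val_eqE /=; bsplit; rewrite /= ?mulr0 ?mulr1 ?addr0 ?add0r ?mulr1n ?mulr0n //; lia.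
Qed.

Ltac msimp := repeat first [rewrite mulmx0 | rewrite mulmx1 | rewrite mul1mx | rewrite mul0mx
  | rewrite addr0 | rewrite add0r | rewrite mulmxN | rewrite mulNmx | rewrite oppr0].

Lemma diag0 m : diag_mx (0 : 'rV[CC]_m) = 0.
Proof. by apply/matrixP => i j; rewrite !mxE mul0rn. Qed.

Lemma decA n : sum_of_elementary (n + n) (n + n) 2 ((n + n) + n) (Atens n).
Proof.
apply: (@realize _ _ _ (row_mx 1%:M (col_mx 1%:M 0)) (row_mx 1%:M (col_mx 0 1%:M))
  (row_mx (const_mx 1) 0) (row_mx 0 (const_mx 1))).
- rewrite MatA0 !diag_mx_row diag0 !diag_const_mx tr_row_mx tr_col_mx !trmx1 trmx0.
  by rewrite mul_row_block mul_row_col; msimp.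
- rewrite MatA1 !diag_mx_row diag0 !diag_const_mx tr_row_mx tr_col_mx !trmx1 trmx0.
  by rewrite mul_row_block mul_row_col; msimp; rewrite mul_col_row; msimp.
Qed.

Definition epsC k : CC := Complex (eps k) 0.
Definition invC k : CC := Complex (INR k.+1) 0.
Lemma ec1 k : epsC k * invC k = 1.
Proof.
rewrite /epsC /invC /=; congr Complex; last by rewrite mulr0 mul0r addr0.
rewrite mulr0 subr0; exact: Rinv_l (not_0_INR _ (Nat.neq_succ_0 _)).
Qed.

Lemma decAk n k : sum_of_elementary (n + n) (n + n) 2 (n + n) (Aktens n k).
Proof.
pose W : 'M[CC]_(n + n) := block_mx 1%:M (- (invC k)%:M) 0 (invC k)%:M.
apply: (@realize _ _ _ (block_mx 1%:M 1%:M 0 (epsC k)%:M) W^T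
  (const_mx 1) (row_mx 0 (const_mx (epsC k)))); rewrite trmxK.
- rewrite MatAk0 diag_const_mx mulmx1 /W mulmx_block; msimp.
  by rewrite addNr -scalar_mxM ec1 -scalar_mx_block.
- rewrite MatAk1 diag_mx_row diag0 !diag_const_mx /W !mulmx_block; msimp.
  by rewrite -!scalar_mxM ec1 -mulrA ec1 mulr1.
Qed.


Lemma rankA n : tensor_rank_eq (Nat.mul 2 n) (Nat.mul 2 n) 2 (Atens n) (Nat.mul 3 n).
Proof.
rewrite (_ : Nat.mul 2 n = n + n); last by lia.
rewrite (_ : Nat.mul 3 n = n + n + n); last by lia.
split; first exact: decA.
move=> r' hr' /extract [X [Y [d0 [d1 [H0 H1]]]]].
rewrite MatA0 in H0; rewrite MatA1 in H1.
have := lower3 (esym H0) (esym H1); lia.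
Qed.

Lemma rankAk n k : tensor_rank_eq (Nat.mul 2 n) (Nat.mul 2 n) 2 (Aktens n k) (Nat.mul 2 n).
Proof.
rewrite (_ : Nat.mul 2 n = n + n); last by lia.
split; first exact: decAk.
move=> r' hr' /extract [X [Y [d0 [d1 [H0 H1]]]]].
rewrite MatAk0 in H0.
have := lower2 (esym H0); lia.
Qed.

Lemma entry0 n k i j : Aktens n k i j 0%N = Atens n i j 0%N.
Proof. by []. Qed.

Lemma entry1 n k i j : exists b b' : bool,
  Aktens n k i j 1%N = Cadd (Cb b) (Cmul (mkC (eps k) R0) (Cb b')) /\ Atens n i j 1%N = Cb b.
Proof. by do 2 eexists; split. Qed.

End Aux.

Lemma Cnorm_bound (c : Defs.C) e : (Re c = e \/ Re c = 0) -> Im c = 0 -> 0 <= e -> Cnorm c <= e.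
Proof.
intros Hr Hi He; unfold Cnorm; rewrite Hi.
destruct Hr as [Hr|Hr]; rewrite Hr.
- replace (e * e + 0 * 0) with (e * e) by ring. rewrite sqrt_square; lra.
- replace (0 * 0 + 0 * 0) with 0 by ring. rewrite sqrt_0; lra.
Qed.

Lemma conv n : tensor_converges (2 * n) (2 * n) 2 (Aux.Aktens n) (Aux.Atens n).
Proof.
intros e He.
destruct (archimed_cor1 e He) as [N [HN HN0]].
exists N; intros k Hk i j q Hi Hj Hq.
assert (Hek : 0 < Aux.eps k /\ Aux.eps k < e).
{ unfold Aux.eps. split.
  - apply Rinv_0_lt_compat, lt_0_INR; lia.
  - apply Rle_lt_trans with (/ INR N); [|exact HN].
    apply Rinv_le_contravar; [apply lt_0_INR; lia|apply le_INR; lia]. }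
destruct q as [|[|q]]; [| |lia].
- rewrite Aux.entry0. apply Rle_lt_trans with 0; [|lra].
  destruct (Aux.Atens n i j 0%nat).
  apply Cnorm_bound; unfold Csub; simpl; [right; ring | ring | lra].
- destruct (Aux.entry1 n k i j) as [b [b' [E1 E2]]]. rewrite E1, E2.
  apply Rle_lt_trans with (Aux.eps k); [|tauto].
  destruct b, b'; apply Cnorm_bound; unfold Csub, Cadd, Cmul, Aux.Cb, C0; simpl;
    solve [left; ring | right; ring | ring | lra].
Qed.

Theorem corollary2 (n : nat) (hn : (1 <= n)%nat) :
  exists (A : tensor) (Ak : nat -> tensor),
    tensor_rank_eq (2 * n) (2 * n) 2 A (3 * n) /\
    (forall k, tensor_rank_eq (2 * n) (2 * n) 2 (Ak k) (2 * n)) /\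
    tensor_converges (2 * n) (2 * n) 2 Ak A.
Proof.
  exists (Aux.Atens n), (Aux.Aktens n).
  split; [exact (Aux.rankA n) |].
  split; [intro k; exact (Aux.rankAk n k) | exact (conv n)].
Qed.
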